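(* Let $\mathbb{X}$ be a finite-dimensional, strictly convex and smooth real Banach space of dimension greater than $1$. Let $\mathcal{F}$ be the class of all norm one operators in $\mathbb{L}(\mathbb{X},\mathbb{X})$ that are smooth points of $\mathbb{L}(\mathbb{X},\mathbb{X})$. Then the pair $(\mathbb{X},\mathbb{X})$ does not have the uniform sBPBp with respect to $\mathcal{F}$.
   Context: $S_{\mathbb{X}}$ is the unit sphere. $\mathbb{X}$ is strictly convex if every point of $S_{\mathbb{X}}$ is an extreme point of the unit ball. A nonzero element $x$ of a Banach space $\mathbb{Z}$ is a smooth point if there is a unique $f\in\mathbb{Z}^*$ with $\|f\|=1$ and $f(x)=\|x\|$; $\mathbb{X}$ is smooth if all its nonzero points are smooth. Given a family $\mathcal{F}$ of norm one operators in $\mathbb{L}(\mathbb{X},\mathbb{Y})$, the pair $(\mathbb{X},\mathbb{Y})$ has uniform sBPBp with respect to $\mathcal{F}$ if for every $\epsilon>0$ there exists $\eta(\epsilon)>0$ such that whenever $T\in\mathcal{F}$ and $x_0\in S_{\mathbb{X}}$ satisfy $\|Tx_0\|>1-\eta(\epsilon)$, there exists $x_1\in S_{\mathbb{X}}$ with $\|Tx_1\|=1$ and $\|x_1-x_0\|<\epsilon$. *)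

(* Defs.v *)
From mathcomp Require Import all_boot all_order all_algebra.
From mathcomp Require Import boolp classical_sets reals.
Set Implicit Arguments. Unset Strict Implicit. Unset Printing Implicit Defensive.
Import Order.TTheory GRing.Theory Num.Theory.
Local Open Scope ring_scope.
Local Open Scope classical_set_scope.

Section Defs.
Variable R : realType.

Definition is_norm (V : lmodType R) (N : V -> R) : Prop :=
  [/\ forall x, N x = 0 -> x = 0,
      forall (a : R) x, N (a *: x) = `|a| * N x
    & forall x y, N (x + y) <= N x + N y].

Definition is_linear_fun (V : lmodType R) (f : V -> R) : Prop :=
  forall (a : R) x y, f (a *: x + y) = a * f x + f y.

Definition is_dual_elt (V : lmodType R) (N : V -> R) (f : V -> R) : Prop :=
  is_linear_fun f /\ exists M : R, forall x, `|f x| <= M * N x.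

Definition dual_norm (V : lmodType R) (N : V -> R) (f : V -> R) : R :=
  sup [set `|f x| | x in [set x | N x <= 1]].

Definition smooth_point (V : lmodType R) (N : V -> R) (x : V) : Prop :=
  x <> 0 /\ exists! f : V -> R,
    [/\ is_dual_elt N f, dual_norm N f = 1 & f x = N x].

Definition extreme_point (V : lmodType R) (B : set V) (x : V) : Prop :=
  B x /\ forall y z (t : R), B y -> B z -> 0 < t < 1 ->
    x = t *: y + (1 - t) *: z -> y = z.

Definition strictly_convex (V : lmodType R) (N : V -> R) : Prop :=
  forall x, N x = 1 -> extreme_point [set y | N y <= 1] x.

Definition smooth_space (V : lmodType R) (N : V -> R) : Prop :=
  forall x, x <> 0 -> smooth_point N x.

(* The finite-dimensional space X is modelled as 'rV[R]_n with a norm N;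
   operators in L(X,X) are matrices A acting by x |-> x *m A. *)
Definition opnorm (n : nat) (N : 'rV[R]_n -> R) (A : 'M[R]_n) : R :=
  sup [set N (x *m A) | x in [set x | N x <= 1]].

Definition uniform_sBPBp (n : nat) (N : 'rV[R]_n -> R) (F : set 'M[R]_n) : Prop :=
  forall eps : R, 0 < eps -> exists eta : R, 0 < eta /\
    forall (T : 'M[R]_n) (x0 : 'rV[R]_n), F T -> N x0 = 1 ->
      N (x0 *m T) > 1 - eta ->
      exists x1 : 'rV[R]_n, [/\ N x1 = 1, N (x1 *m T) = 1 & N (x1 - x0) < eps].

Definition smooth_norm_one_ops (n : nat) (N : 'rV[R]_n -> R) : set 'M[R]_n :=
  [set T | opnorm N T = 1 /\ smooth_point (opnorm N) T].

End Defs.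

(* Main.v *)
Require Import Defs.
From mathcomp Require Import all_boot all_order all_algebra.
From mathcomp Require Import boolp classical_sets reals.
From mathcomp Require Import topology normedtype.
From mathcomp Require Import ring lra.
Set Implicit Arguments. Unset Strict Implicit. Unset Printing Implicit Defensive.
Import Order.TTheory GRing.Theory Num.Theory.
Import numFieldNormedType.Exports.
Local Open Scope ring_scope.
Local Open Scope classical_set_scope.

Section Topo.
Variable R : realType.

Lemma nested_compact (T : topologicalType) (K : set T) (S : nat -> set T) :
  compact K -> (forall k, closed (S k)) -> (forall k, S k `<=` K) ->
  (forall k j, (k <= j)%N -> S j `<=` S k) -> (forall k, S k !=set0) ->
  exists p, forall k, S k p.
Proof.
move=> cK cS SK Sdec Sne.
have [s Hs] : exists s : nat -> T, forall k, S k (s k).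
  by exists (fun k => projT1 (cid (Sne k))) => k; exact: (projT2 (cid (Sne k))).
have FK : (s @ \oo) K by exists 0%N => // k _; exact: SK.
have [p [_ cp]] := cK _ _ FK.
exists p => k; rewrite clusterE in cp.
have : closure (S k) p.
  apply: cp; exists k => // j /= kj; exact: Sdec kj _ (Hs j).
exact: cS.
Qed.

Lemma lip_cont n (f : 'rV[R]_n -> R) L :
  (forall x y, `|f x - f y| <= L * `|x - y|) -> continuous f.
Proof.
move=> Hf x; have FF : ProperFilter (nbhs x) by exact: nbhs_pfilter.
apply/cvgrPdist_lt => e e0.
have L0 : 0 < `|L| + 1 by rewrite ltr_pwDr // normr_ge0.
have : \forall t \near x, `|x - t| < e / (`|L| + 1).
  have := @nbhsx_ballx _ _ x _ (divr_gt0 e0 L0).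
  by rewrite -ball_normE.
apply: filterS => t /= ht.
apply: (le_lt_trans (Hf x t)).
apply: (le_lt_trans (y := (`|L| + 1) * `|x - t|)).
  by apply: ler_wpM2r; [exact: normr_ge0 | rewrite (le_trans (ler_norm L)) // lerDl].
by rewrite -ltr_pdivlMl // mulrC.
Qed.

Lemma closed_fle (T : topologicalType) (f : T -> R) a : continuous f -> closed [set x | f x <= a].
Proof.
move=> cf; apply: (@preimage_closed _ _ f [set y | y <= a]); last exact: closed_le.
by move=> x _; exact: cf.
Qed.

Lemma closed_fge (T : topologicalType) (f : T -> R) a : continuous f -> closed [set x | a <= f x].
Proof.
move=> cf; apply: (@preimage_closed _ _ f [set y | a <= y]); last exact: closed_ge.
by move=> x _; exact: cf.
Qed.

Lemma bounded_by n (A : set 'rV[R]_n) M : (forall x, A x -> `|x| <= M) -> bounded_set A.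
Proof.
move=> HA; exists M; split; first exact: num_real.
by move=> M' MM' x Ax; apply: (le_trans (HA x Ax)); exact: ltW.
Qed.

Lemma coord_le_norm n (x : 'rV[R]_n) i : `|x 0 i| <= `|x|.
Proof.
have /mapP[j Hj ->] : `|x 0 i| \in [seq `|x k.1 k.2| | k : 'I_1 * 'I_n].
  by apply/mapP; exists (0, i) => //=; rewrite mem_enum.
by rewrite [leRHS]/Num.Def.normr /= mx_normrE; apply/bigmax_geP; right => /=; exists j.
Qed.


Definition eta_ (k : nat) : R := (k.+1%:R)^-1.

Lemma eta_gt0 k : 0 < eta_ k.
Proof. by rewrite /eta_ invr_gt0 ltr0n. Qed.

Lemma eta_dec k j : (k <= j)%N -> eta_ j <= eta_ k.
Proof. by move=> kj; rewrite /eta_ lef_pV2 ?posrE ?ltr0n // ler_nat. Qed.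

Lemma eta_small (a : R) : 0 < a -> exists k, eta_ k < a.
Proof.
move=> a0; exists (Num.truncn (a^-1)).
have := Num.Theory.truncnS_gt (a^-1); set m := Num.truncn _ => Hm.
by rewrite /eta_ -[a in _ < a]invrK ltf_pV2 ?posrE ?ltr0n ?invr_gt0.
Qed.

Lemma le0_eta (a : R) : (forall k, a <= eta_ k) -> a <= 0.
Proof.
move=> H; rewrite leNgt; apply/negP => a0.
by have [k /lt_le_trans/(_ (H k))] := eta_small a0; rewrite ltxx.
Qed.

Lemma nc_le (T : topologicalType) (K C : set T) (phi : T -> R) :
  compact K -> closed C -> C `<=` K -> continuous phi ->
  (forall k, exists x, C x /\ phi x <= eta_ k) -> exists x, C x /\ phi x <= 0.
Proof.
move=> cK cC CK cphi H.
pose S k := C `&` [set x | phi x <= eta_ k].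
have h1 : forall k, S k `<=` K by move=> k x Hx; exact: CK x Hx.1.
have h2 : forall k j, (k <= j)%N -> S j `<=` S k.
  by move=> k j kj x [Cx Hx]; split => //; exact: le_trans Hx (eta_dec kj).
have h3 : forall k, S k !=set0 by move=> k; have [x Hx] := H k; exists x.
have [p Hp] := @nested_compact T K S cK
  (fun k => closedI cC (closed_fle (a := eta_ k) cphi)) h1 h2 h3.
exists p; split; first exact: (Hp 0%N).1.
by apply: le0_eta => k; exact: (Hp k).2.
Qed.

End Topo.
Arguments eta_ {R} k.

Section NormFacts.
Variables (R : realType) (n : nat) (N : 'rV[R]_n -> R).
Hypothesis HN : is_norm N.

Lemma NZ a x : N (a *: x) = `|a| * N x.
Proof. by case: HN. Qed.

Lemma NT x y : N (x + y) <= N x + N y.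
Proof. by case: HN. Qed.

Lemma N_eq0 x : N x = 0 -> x = 0.
Proof. by case: HN => H _ _; exact: H. Qed.

Lemma N0 : N 0 = 0.
Proof. by rewrite -(scale0r 0) NZ normr0 mul0r. Qed.

Lemma NN x : N (- x) = N x.
Proof. by rewrite -scaleN1r NZ normrN normr1 mul1r. Qed.

Lemma Nge0 x : 0 <= N x.
Proof.
have := NT x (- x); rewrite subrr N0 NN -mulr2n.
by rewrite -(mulr_natl (N x)) pmulr_rge0 // ltr0n.
Qed.

Lemma Ngt0 x : x != 0 -> 0 < N x.
Proof.
move=> x0; rewrite lt_def Nge0 andbT; apply/eqP => /N_eq0 H.
by rewrite H eqxx in x0.
Qed.

Lemma NB x y : N x - N y <= N (x - y).
Proof. by rewrite lerBlDr; have := NT (x - y) y; rewrite subrK. Qed.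

Lemma Ndist x y : `|N x - N y| <= N (x - y).
Proof.
rewrite ler_norml NB andbT lerNl opprB.
by rewrite -[N (x - y)]NN opprB; exact: NB.
Qed.

Lemma Nsum (I : Type) (r : seq I) (F : I -> 'rV[R]_n) :
  N (\sum_(i <- r) F i) <= \sum_(i <- r) N (F i).
Proof.
elim: r => [|a r IH]; first by rewrite !big_nil N0.
rewrite !big_cons; apply: le_trans (NT _ _) _; exact: lerD.
Qed.

Definition KN := \sum_(i < n) N (delta_mx 0 i).

Lemma KN_ge0 : 0 <= KN.
Proof. by apply: sumr_ge0 => i _; exact: Nge0. Qed.

Lemma N_le_mx x : N x <= `|x| * KN.
Proof.
rewrite {1}(row_sum_delta x) /KN mulr_sumr.
apply: le_trans; first exact: Nsum.
apply: ler_sum => i _; rewrite NZ.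
by apply: ler_wpM2r; [exact: Nge0 | exact: coord_le_norm].
Qed.

Lemma N_lip x y : `|N x - N y| <= KN * `|x - y|.
Proof. by rewrite mulrC; apply: le_trans (Ndist x y) (N_le_mx _). Qed.

Lemma N_cont : continuous N.
Proof. exact: lip_cont N_lip. Qed.

End NormFacts.

Section Lin.
Variable R : realType.

Lemma sup_ge (E : set R) x y : E x -> (forall z, E z -> z <= y) -> x <= sup E.
Proof.
move=> Ex Hy; apply: (sup_upper_bound (E := E)) => //.
by split; [exists x | exists y => z Ez; exact: Hy].
Qed.

Lemma sup_le (E : set R) x y : E x -> (forall z, E z -> z <= y) -> sup E <= y.
Proof. by move=> Ex Hy; apply: ge_sup; [exists x | move=> z Ez; exact: Hy]. Qed.

Lemma sup_eq (E : set R) x : E x -> (forall z, E z -> z <= x) -> sup E = x.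
Proof.
by move=> Ex Hx; apply/le_anti; rewrite (sup_le Ex Hx) (sup_ge Ex Hx).
Qed.

Variable V : lmodType R.
Variable f : V -> R.
Hypothesis Hf : is_linear_fun f.

Lemma lin0 : f 0 = 0.
Proof.
have := Hf 1 0 0; rewrite scale1r addr0 mul1r => /eqP.
by rewrite -subr_eq subrr eq_sym => /eqP.
Qed.

Lemma linZ a x : f (a *: x) = a * f x.
Proof. by have := Hf a x 0; rewrite addr0 lin0 addr0. Qed.

Lemma linD x y : f (x + y) = f x + f y.
Proof. by have := Hf 1 x y; rewrite scale1r mul1r. Qed.

Lemma linN x : f (- x) = - f x.
Proof. by rewrite -scaleN1r linZ mulN1r. Qed.

Lemma linB x y : f (x - y) = f x - f y.
Proof. by rewrite linD linN. Qed.

Lemma lin_sum (I : Type) (r : seq I) (F : I -> V) :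
  f (\sum_(i <- r) F i) = \sum_(i <- r) f (F i).
Proof.
elim: r => [|a r IH]; first by rewrite !big_nil lin0.
by rewrite !big_cons linD IH.
Qed.

End Lin.

Lemma lin_expand (R : realType) n (f : 'rV[R]_n -> R) : is_linear_fun f ->
  forall x, f x = \sum_i x 0 i * f (delta_mx 0 i).
Proof.
move=> Hf x; rewrite {1}(row_sum_delta x) lin_sum //.
by apply: eq_bigr => i _; rewrite linZ.
Qed.

Section Main.
Variables (R : realType) (n : nat) (N : 'rV[R]_n -> R).
Hypothesis HN : is_norm N.

Lemma dual_le f : is_dual_elt N f -> dual_norm N f = 1 -> forall x, `|f x| <= N x.
Proof.
move=> [Hl [M HM]] Hd x.
have [->|x0] := eqVneq x 0; first by rewrite lin0 // normr0 Nge0.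
have Nx0 := Ngt0 HN x0.
pose x' := (N x)^-1 *: x.
have Nx' : N x' = 1.
  by rewrite /x' NZ // ger0_norm ?invr_ge0 ?Nge0 // mulVf // gt_eqF.
have : `|f x'| <= 1.
  rewrite -Hd; apply: (@sup_ge _ _ _ `|M|); first by exists x' => //; rewrite /= Nx'.
  move=> z [y Ny <-]; apply: le_trans (HM y) _.
  apply: le_trans (ler_wpM2r (Nge0 HN y) (ler_norm M)) _.
  by rewrite -[leRHS]mulr1; apply: ler_wpM2l.
rewrite /x' linZ // normrM ger0_norm ?invr_ge0 ?Nge0 //.
by rewrite ler_pdivrMl // mulr1.
Qed.

Lemma norm_le_coord m (x : 'rV[R]_m) M : 0 <= M -> (forall i, `|x 0 i| <= M) -> `|x| <= M.
Proof.
move=> M0 H; rewrite /Num.Def.normr /= mx_normrE; apply: bigmax_le => // [[i j]] _ /=.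
by rewrite (ord1 i); exact: H.
Qed.

Lemma L3 : exists c0 : R, 0 < c0 /\ forall x, c0 * `|x| <= N x.
Proof.
case: (pselect (exists k, forall x : 'rV[R]_n, `|x| = 1 -> eta_ k < N x)).
  move=> [k Hk]; exists (eta_ k); split; first exact: eta_gt0.
  move=> x; have [->|x0] := eqVneq x 0; first by rewrite normr0 mulr0 Nge0.
  have nx0 : 0 < `|x| by rewrite normr_gt0.
  have := Hk (`|x|^-1 *: x).
  rewrite normrZ ger0_norm ?invr_ge0 ?normr_ge0 // mulVf ?gt_eqF // => /(_ erefl).
  rewrite NZ // ger0_norm ?invr_ge0 ?normr_ge0 // => H.
  by rewrite mulrC -ler_pdivlMl // ltW.
move=> Hno.
have H : forall k, exists x, ([set x : 'rV[R]_n | `|x| <= 1] `&` [set x | 1 <= `|x|]) x /\ N x <= eta_ k.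
  move=> k; apply: contrapT => Hk; apply: Hno; exists k => x x1.
  rewrite ltNge; apply/negP => Nx; apply: Hk; exists x; split => //.
  by rewrite /= x1; split.
have nc : continuous (fun x : 'rV[R]_n => `|x|).
  by apply: (@lip_cont _ _ _ 1) => x y; rewrite mul1r ler_dist_dist.
have [x [[/= x1 x2] Nx]] := nc_le (K := [set x : 'rV[R]_n | `|x| <= 1])
  (bounded_closed_compact (bounded_by (M := 1) (fun x (h : `|x| <= 1) => h)) (closed_fle (a := 1) nc))
  (closedI (closed_fle (a := 1) nc) (closed_fge (a := 1) nc))
  (fun x hx => hx.1) (N_cont HN) H.
have Nx0 : N x = 0 by apply/le_anti; rewrite Nx Nge0.
by move: x2; rewrite (N_eq0 HN Nx0) normr0 ler10.
Qed.

Lemma opbound (A : 'M[R]_n) : exists C, 0 <= C /\ forall x, N (x *m A) <= C * N x.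
Proof.
have [c0 [c00 Hc]] := L3.
exists ((\sum_i N (row i A)) / c0); split.
  by apply: divr_ge0; [apply: sumr_ge0 => i _; exact: Nge0 | exact: ltW].
move=> x; rewrite (mulmx_sum_row x A).
have HS := @Nsum _ _ _ HN _ (index_enum 'I_n) (fun i => x 0 i *: row i A).
apply: (le_trans HS).
have -> : (\sum_i N (row i A)) / c0 * N x = \sum_i (N x / c0) * N (row i A).
  by rewrite -mulr_sumr mulrC mulrA mulrAC.
apply: ler_sum => i _; rewrite NZ //.
rewrite mulrC [in leRHS]mulrC; apply: ler_wpM2l; first exact: Nge0.
rewrite ler_pdivlMr // mulrC (le_trans _ (Hc x)) //.
by apply: ler_wpM2l; [exact: ltW | exact: coord_le_norm].
Qed.

Lemma opnorm_ge (A : 'M[R]_n) x : N x <= 1 -> N (x *m A) <= opnorm N A.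
Proof.
move=> Nx; have [C [C0 HC]] := opbound A.
apply: (@sup_ge _ _ _ C); first by exists x.
move=> z [y Ny <-]; apply: le_trans (HC y) _.
by rewrite -[leRHS]mulr1; apply: ler_wpM2l.
Qed.

Lemma opnorm_le (A : 'M[R]_n) s : (forall x, N x <= 1 -> N (x *m A) <= s) -> opnorm N A <= s.
Proof.
move=> H; apply: (@sup_le _ _ (N (0 *m A))); first by exists 0 => //; rewrite /= (N0 HN) ler01.
by move=> z [y Ny <-]; exact: H.
Qed.

Lemma opnorm_ge0 (A : 'M[R]_n) : 0 <= opnorm N A.
Proof. by apply: le_trans (opnorm_ge A (x := 0) _); rewrite ?mul0mx (N0 HN) // ler01. Qed.

End Main.

Section Main2.
Variables (R : realType) (n : nat) (N : 'rV[R]_n -> R).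
Hypothesis HN : is_norm N.
Hypothesis Hsc : strictly_convex N.
Hypothesis Hsm : smooth_space N.
Variables (u : 'rV[R]_n) (g : 'rV[R]_n -> R).
Hypothesis Hu : N u = 1.
Hypothesis Hg : is_dual_elt N g.
Hypothesis Hgd : dual_norm N g = 1.
Hypothesis Hgu : g u = 1.

Lemma g_le x : `|g x| <= N x.
Proof. exact: (dual_le HN Hg Hgd). Qed.

Lemma g_lin : is_linear_fun g.
Proof. by case: Hg. Qed.

Lemma lip_of (f : 'rV[R]_n -> R) : (forall x y, `|f x - f y| <= N (x - y)) -> continuous f.
Proof.
move=> H; apply: (@lip_cont _ _ _ (KN N)) => x y.
by apply: le_trans (H x y) _; rewrite mulrC; exact: N_le_mx.
Qed.

Lemma g_cont : continuous g.
Proof. by apply: lip_of => x y; rewrite -linB ?g_le //; exact: g_lin. Qed.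

Lemma unif_sc eps : 0 < eps -> exists eta : R, 0 < eta /\
  forall x, N x <= 1 -> 1 - eta <= g x -> N (x - u) < eps.
Proof.
move=> e0.
case: (pselect (exists k, forall x, N x <= 1 -> 1 - eta_ k <= g x -> N (x - u) < eps)).
  by move=> [k Hk]; exists (eta_ k); split; [exact: eta_gt0 | exact: Hk].
move=> Hno.
have [c0 [c00 Hc]] := L3 HN.
have H : forall k, exists x, ([set x | N x <= 1] `&` [set x | eps <= N (x - u)]) x /\ 1 - g x <= eta_ k.
  move=> k; apply: contrapT => Hk; apply: Hno; exists k => x x1 gx.
  rewrite ltNge; apply/negP => Nx; apply: Hk; exists x; split => //.
  by rewrite lerBlDr addrC -lerBlDr.
have cN : continuous N := N_cont HN.
have cNu : continuous (fun x : 'rV[R]_n => N (x - u)).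
  apply: lip_of => x y; apply: le_trans (Ndist HN _ _) _.
  by rewrite opprB addrA subrK.
have cphi : continuous (fun x : 'rV[R]_n => 1 - g x).
  apply: lip_of => x y; have -> : (1 - g x) - (1 - g y) = g (y - x).
    by rewrite (linB g_lin); ring.
  by rewrite -normrN -linN ?opprB ?g_le //; exact: g_lin.
have [x [[/= x1 x2] gx]] := nc_le (K := [set x : 'rV[R]_n | `|x| <= c0^-1])
  (bounded_closed_compact (bounded_by (M := c0^-1) (fun x (h : `|x| <= c0^-1) => h))
     (closed_fle (a := c0^-1) (@lip_cont _ _ _ 1 (fun x y => ltac:(rewrite mul1r; exact: ler_dist_dist)))))
  (closedI (closed_fle (a := 1) cN) (closed_fge (a := eps) cNu))
  (fun x hx => ltac:(rewrite /= -(ler_pM2l c00) mulfV ?gt_eqF //; exact: le_trans (Hc x) hx.1))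
  cphi H.
have g1 : 1 <= g x by rewrite -subr_le0.
have gx1 : g x = 1.
  by apply/le_anti; rewrite g1 andbT (le_trans (ler_norm _) (le_trans (g_le x) x1)).
have Nx1 : N x = 1.
  by apply/le_anti; rewrite x1 /= -gx1 (le_trans (ler_norm _) (g_le x)).
pose m := 2^-1 *: x + (1 - 2^-1) *: u.
have h3 : (2^-1 + 2^-1 : R) = 1 by rewrite [RHS](splitr 1) mul1r.
have h2 : (1 - 2^-1 : R) = 2^-1 by rewrite -{1}h3 addrK.
have gm : g m = 1.
  by rewrite /m (linD g_lin) !(linZ g_lin) gx1 Hgu !mulr1 h2 h3.
have Nm : N m = 1.
  apply/le_anti; apply/andP; split; last first.
    by rewrite -gm (le_trans (ler_norm _) (g_le m)).
  apply: le_trans (NT HN _ _) _; rewrite !(NZ HN) Nx1 Hu h2 ger0_norm ?invr_ge0 ?ler0n //.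
  by rewrite mulr1 h3.
have [_ Hext] := Hsc Nm.
have xu : x = u.
  apply: (Hext x u 2^-1) => //=; first by rewrite Hu.
  by rewrite invr_gt0 ltr0n /= invf_lt1 ?ltr0n // ltr1n.
by move: x2; rewrite xu subrr (N0 HN) leNgt e0.
Qed.


Definition ev (c y : 'rV[R]_n) : R := \sum_i y 0 i * c 0 i.
Definition cg : 'rV[R]_n := \row_i g (delta_mx 0 i).

Lemma ev_delta c i : ev c (delta_mx 0 i) = c 0 i.
Proof.
rewrite /ev (bigD1 i) //= mxE !eqxx mul1r big1 ?addr0 // => j ji.
by rewrite mxE eqxx /= (negbTE ji) mul0r.
Qed.

Lemma ev_lin c : is_linear_fun (ev c).
Proof.
move=> a x y; rewrite /ev mulr_sumr -big_split; apply: eq_bigr => i _.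
by rewrite !mxE mulrDl mulrA.
Qed.

Lemma ev_row (f : 'rV[R]_n -> R) : is_linear_fun f -> forall y, ev (\row_i f (delta_mx 0 i)) y = f y.
Proof.
move=> fl y; rewrite (lin_expand fl y); apply: eq_bigr => i _; by rewrite mxE.
Qed.

Lemma ev_lip y c d : `|ev c y - ev d y| <= (\sum_i `|y 0 i|) * `|c - d|.
Proof.
rewrite /ev -sumrB mulr_suml; apply: le_trans (ler_norm_sum _ _ _) _.
apply: ler_sum => i _; rewrite -mulrBr normrM; apply: ler_wpM2l; first exact: normr_ge0.
by have := coord_le_norm (c - d) i; rewrite !mxE.
Qed.

Lemma Nei_le i : N (delta_mx 0 i) <= KN N.
Proof.
rewrite /KN (bigD1 i) //= lerDl; apply: sumr_ge0 => j _; exact: Nge0.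
Qed.

Lemma u_neq0 : u != 0.
Proof. by apply/eqP => u0; move: Hu; rewrite u0 (N0 HN) => /eqP; rewrite eq_sym oner_eq0. Qed.

Lemma support_uniq h : is_linear_fun h -> (forall x, `|h x| <= N x) -> 1 <= h u -> h = g.
Proof.
move=> hl hb hu.
have hu1 : h u = 1 by apply/le_anti; rewrite hu andbT -Hu (le_trans (ler_norm _) (hb u)).
have u0 : u <> 0 by apply/eqP; exact: u_neq0.
have [_ [f0 [_ Hf0]]] := Hsm u0.
have Ph : [/\ is_dual_elt N h, dual_norm N h = 1 & h u = N u].
  split; [split => //; exists 1 => x; rewrite mul1r; exact: hb | | by rewrite Hu].
  apply: (@sup_eq _ _ 1); first by exists u; rewrite /= ?Hu ?hu1 ?normr1.
  by move=> z [y Ny <-]; exact: le_trans (hb y) Ny.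
have Pg : [/\ is_dual_elt N g, dual_norm N g = 1 & g u = N u] by split; rewrite ?Hu.
by rewrite -(Hf0 _ Ph) -(Hf0 _ Pg).
Qed.

Lemma dual_unif eps : 0 < eps -> exists eta : R, 0 < eta /\
  forall f, is_linear_fun f -> (forall x, `|f x| <= N x) -> 1 - eta <= f u ->
  forall i, `|f (delta_mx 0 i) - g (delta_mx 0 i)| < eps.
Proof.
move=> e0.
case: (pselect (exists k, forall f, is_linear_fun f -> (forall x, `|f x| <= N x) -> 1 - eta_ k <= f u ->
  forall i, `|f (delta_mx 0 i) - g (delta_mx 0 i)| < eps)).
  by move=> [k Hk]; exists (eta_ k); split; [exact: eta_gt0 | exact: Hk].
move=> Hno.
pose C := (\bigcap_(y in [set: 'rV[R]_n]) [set c | `|ev c y| <= N y]) `&` [set c | eps <= `|c - cg|].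
have H : forall k, exists c, C c /\ 1 - ev c u <= eta_ k.
  move=> k; apply: contrapT => Hk; apply: Hno; exists k => f fl fb fu i.
  rewrite ltNge; apply/negP => Hi; apply: Hk; exists (\row_i f (delta_mx 0 i)); split.
    split; first by move=> y _ /=; rewrite ev_row.
    by apply: le_trans Hi _; have := coord_le_norm (\row_i0 f (delta_mx 0 i0) - cg) i; rewrite !mxE.
  by rewrite ev_row // lerBlDr addrC -lerBlDr.
have cev y : continuous (fun c => ev c y).
  apply: (@lip_cont _ _ _ (\sum_i `|y 0 i|)) => c d; exact: ev_lip.
have cnev y : continuous (fun c => `|ev c y|).
  apply: (@lip_cont _ _ _ (\sum_i `|y 0 i|)) => c d.
  exact: le_trans (ler_dist_dist _ _) (ev_lip y c d).
have cncg : continuous (fun c : 'rV[R]_n => `|c - cg|).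
  apply: (@lip_cont _ _ _ 1) => c d; rewrite mul1r.
  by apply: le_trans (ler_dist_dist _ _) _; rewrite opprB addrA subrK.
have cphi : continuous (fun c => 1 - ev c u).
  apply: (@lip_cont _ _ _ (\sum_i `|u 0 i|)) => c d.
  have -> : (1 - ev c u) - (1 - ev d u) = ev d u - ev c u by ring.
  by rewrite distrC; exact: ev_lip.
have cC : closed C.
  apply: closedI; last exact: (closed_fge (a := eps) cncg).
  by apply: closed_bigI => y _; exact: (closed_fle (a := N y) (cnev y)).
have CK : C `<=` [set c : 'rV[R]_n | `|c| <= KN N].
  move=> c [Hc _] /=; apply: norm_le_coord; first exact: KN_ge0.
  by move=> i; rewrite -ev_delta; apply: le_trans (Hc _ I) (Nei_le i).
have [c [[/= Hc1 Hc2] Hc3]] := nc_le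
  (bounded_closed_compact (bounded_by (M := KN N) (fun x (h : `|x| <= KN N) => h))
     (closed_fle (a := KN N) (@lip_cont _ _ _ 1 (fun x y => ltac:(rewrite mul1r; exact: ler_dist_dist)))))
  cC CK cphi H.
have hg := support_uniq (ev_lin c) (fun y => Hc1 y I) (ltac:(by rewrite -subr_le0)).
have ccg : c = cg by apply/rowP => i; rewrite mxE -ev_delta hg.
by move: Hc2; rewrite ccg subrr normr0 leNgt e0.
Qed.

Lemma frechet eps : 0 < eps -> exists eta : R, 0 < eta /\
  forall w, N w <= eta -> N (u + w) <= 1 + g w + eps * N w.
Proof.
move=> e0.
have [c0 [c00 Hc]] := L3 HN.
have n10 : 0 < (n%:R + 1 : R) by rewrite ltr_wpDl ?ler0n.
pose eps' := eps * c0 / (n%:R + 1).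
have e'0 : 0 < eps' by rewrite /eps' divr_gt0 // mulr_gt0.
have [eta6 [eta60 H6]] := dual_unif e'0.
have d0 : 0 < 2 + eta6 by rewrite addr_gt0 ?ltr0n.
exists (eta6 / (2 + eta6)); split; first by rewrite divr_gt0.
move=> w Nw.
have Nw2 : 2 * N w <= eta6.
  apply: le_trans (ler_wpM2l (ler0n _ 2) Nw) _.
  by rewrite mulrA ler_pdivrMr // [in leLHS]mulrC ler_pM2l // lerDl ltW.
have Nw1 : N w < 1.
  by apply: le_lt_trans Nw _; rewrite ltr_pdivrMr // mul1r ltrDr.
have Nuw : 1 - N w <= N (u + w).
  by rewrite -Hu -(NN HN w); apply: le_trans (NB HN _ _) _; rewrite opprK.
have uw0 : u + w <> 0.
  move=> uw; move: Nuw; rewrite uw (N0 HN) subr_le0 leNgt Nw1 //.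
have [_ [f [[Hfd Hfn Hfe] _]]] := Hsm uw0.
have fb := dual_le HN Hfd Hfn.
have fl : is_linear_fun f by case: Hfd.
have fu : 1 - eta6 <= f u.
  have -> : f u = N (u + w) - f w by rewrite -Hfe (linD fl) addrK.
  apply: le_trans (lerB Nuw (le_trans (ler_norm _) (fb w))).
  by rewrite -addrA -opprD lerD2l lerN2 -mulr2n -mulr_natl.
have Hi := H6 f fl fb fu.
have fwg : f w - g w <= eps * N w.
  rewrite (lin_expand fl w) (lin_expand g_lin w) -sumrB.
  apply: le_trans (ler_norm _) _; apply: le_trans (ler_norm_sum _ _ _) _.
  apply: (le_trans (y := \sum_(i < n) `|w| * eps')).
    apply: ler_sum => i _; rewrite -mulrBr normrM.
    apply: ler_pM; [exact: normr_ge0 | exact: normr_ge0 | exact: coord_le_norm | exact: ltW].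
  rewrite sumr_const card_ord -mulr_natr.
  apply: (le_trans (y := `|w| * eps' * (n%:R + 1))).
    by apply: ler_wpM2l; [rewrite mulr_ge0 ?normr_ge0 ?ltW | rewrite lerDl].
  rewrite /eps' -mulrA divfK ?gt_eqF // mulrCA; apply: ler_wpM2l; first exact: ltW.
  by rewrite mulrC; exact: Hc.
rewrite -Hfe (linD fl) -addrA; apply: lerD.
  by rewrite -Hu; exact: le_trans (ler_norm _) (fb u).
by rewrite -lerBlDl.
Qed.

Definition Pm : 'M[R]_n := (\col_i g (delta_mx 0 i)) *m u.

Lemma xP x : x *m Pm = g x *: u.
Proof.
rewrite /Pm mulmxA.
have -> : x *m (\col_i g (delta_mx 0 i)) = (g x)%:M.
  apply/matrixP => i j; rewrite (ord1 i) (ord1 j) !mxE /= mulr1n.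
  rewrite (lin_expand g_lin x); apply: eq_bigr => k _; by rewrite mxE.
by rewrite mul_scalar_mx.
Qed.

Lemma NxP x : N (x *m Pm) = `|g x|.
Proof. by rewrite xP (NZ HN) Hu mulr1. Qed.

Lemma g_le1 x : N x <= 1 -> `|g x| <= 1.
Proof. by move=> Nx; exact: le_trans (g_le x) Nx. Qed.

Lemma estimate (A : 'M[R]_n) eps : 0 < eps -> exists t : R, 0 < t /\ t * `|g (u *m A)| <= 2^-1 /\
  forall x, N x <= 1 -> N (x *m (Pm + t *: A)) <= 1 + t * (g (u *m A) + eps).
Proof.
move=> e0.
have [C [C0 HC]] := opbound HN A.
pose C1 := C + 1.
have C10 : 0 < C1 by rewrite /C1 ltr_wpDl.
pose b := g (u *m A).
pose eps1 := eps / (2 * C1).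
have e10 : 0 < eps1 by rewrite /eps1 divr_gt0 // mulr_gt0 ?ltr0n.
have Ce1 : 2 * (C * eps1) <= eps.
  have E : 2 * (C1 * eps1) = eps by rewrite /eps1; field; rewrite gt_eqF.
  rewrite -[leRHS]E; apply: ler_wpM2l; first by rewrite ler0n.
  by apply: ler_wpM2r; [exact: ltW | rewrite /C1 lerDl].
have [eta_a [ea0 Ha]] := unif_sc e10.
pose ea := Num.min eta_a 2^-1.
have ea0' : 0 < ea by rewrite lt_min ea0 invr_gt0 ltr0n.
have eaa : ea <= eta_a by rewrite ge_min lexx.
have ea2 : ea <= 2^-1 by rewrite ge_min lexx orbT.
have [eta_f [ef0 Hf]] := frechet e10.
pose D := C1 + `|b| + eps.
have D0 : 0 < D by rewrite /D addr_gt0 // ltr_wpDr ?normr_ge0.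
pose t := Num.min (ea / D) (eta_f / (2 * C1)).
have t0 : 0 < t by rewrite lt_min !divr_gt0 ?mulr_gt0 ?ltr0n.
have tD : t * D <= ea by rewrite -ler_pdivlMr // ge_min lexx.
have tC : t * (2 * C1) <= eta_f by rewrite -ler_pdivlMr ?mulr_gt0 ?ltr0n // ge_min lexx orbT.
exists t; split => //; split.
  apply: le_trans ea2; apply: le_trans tD; apply: ler_wpM2l; first exact: ltW.
  by rewrite /D; move: C10 e0; lra.
have eqv x : x *m (Pm + t *: A) = g x *: u + t *: (x *m A).
  by rewrite mulmxDr xP scalemxAr.
have pos x : N x <= 1 -> 1 - ea <= g x -> N (g x *: u + t *: (x *m A)) <= 1 + t * (b + eps).
  move=> Nx gx.
  set a := g x.
  have a1 : a <= 1 by apply: le_trans (ler_norm _) (g_le1 Nx).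
  have a2 : 2^-1 <= a.
    by apply: le_trans gx; move: ea2; lra.
  have a0 : 0 < a by apply: lt_le_trans a2; rewrite invr_gt0 ltr0n.
  pose w := (t / a) *: (x *m A).
  have NxA : N (x *m A) <= C by apply: le_trans (HC x) _; rewrite -[leRHS]mulr1 ler_wpM2l.
  have Nw : N w = t / a * N (x *m A) by rewrite /w (NZ HN) ger0_norm // divr_ge0 // ltW.
  have Nw_le : N w <= eta_f.
    rewrite Nw; apply: le_trans tC; rewrite -mulrA ler_pM2l //.
    apply: ler_pM; [by rewrite invr_ge0 ltW | exact: Nge0 | | by apply: le_trans NxA _; rewrite /C1 lerDl].
    by rewrite -[2]invrK lef_pV2 ?posrE ?invr_gt0 ?ltr0n.
  have eqw : g x *: u + t *: (x *m A) = a *: (u + w).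
    by rewrite scalerDr /w scalerA mulrCA divff ?gt_eqF // mulr1.
  rewrite eqw (NZ HN) (ger0_norm (ltW a0)).
  have H1 := Hf w Nw_le.
  have gw : g w = t / a * g (x *m A) by rewrite /w (linZ g_lin).
  have xA : g (x *m A) = b + g ((x - u) *m A).
    by rewrite mulmxBl (linB g_lin) /b addrC subrK.
  have gxu : g ((x - u) *m A) <= C * eps1.
    apply: le_trans (ler_norm _) _; apply: le_trans (g_le _) _.
    apply: le_trans (HC _) _; apply: ler_wpM2l => //.
    apply: ltW; apply: Ha => //; apply: le_trans gx; move: eaa; lra.
  have step : a * N (u + w) <= a + t * g (x *m A) + eps1 * (t * N (x *m A)).
    apply: le_trans (ler_wpM2l (ltW a0) H1) _.
    rewrite gw Nw le_eqVlt; apply/orP; left; apply/eqP.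
    by field; rewrite gt_eqF.
  apply: (le_trans step).
  have t1 : t * g ((x - u) *m A) <= t * (C * eps1) by apply: ler_wpM2l => //; exact: ltW.
  have t2 : eps1 * (t * N (x *m A)) <= t * (C * eps1).
    have : t * N (x *m A) <= t * C by apply: ler_wpM2l => //; exact: ltW.
    move=> /(ler_wpM2l (ltW e10)) h; apply: (le_trans h).
    by rewrite mulrCA [eps1 * C]mulrC.
  have t3 : t * (2 * (C * eps1)) <= t * eps by apply: ler_wpM2l => //; exact: ltW.
  rewrite mulrDr; set X := t * g _ in t1 *; set Y := t * (C * eps1) in t1 t2 t3 *.
  have e3 : t * (2 * (C * eps1)) = Y + Y by rewrite /Y; ring.
  rewrite e3 in t3.
  rewrite xA mulrDr -/X; lra.
move=> x Nx; rewrite eqv.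
have [gx|gx] := lerP (1 - ea) (g x); first exact: pos.
have [gx'|gx'] := lerP (g x) (- (1 - ea)).
  have Nx' : N (- x) <= 1 by rewrite (NN HN).
  have := pos (- x) Nx'; rewrite (linN g_lin) lerNr => /(_ gx').
  by rewrite mulNmx scaleNr scalerN -opprD (NN HN).
apply: le_trans (NT HN _ _) _; rewrite !(NZ HN) Hu mulr1 (ger0_norm (ltW t0)).
have ga : `|g x| <= 1 - ea by rewrite ler_norml; apply/andP; split; apply: ltW.
have NxA : N (x *m A) <= C by apply: le_trans (HC x) _; rewrite -[leRHS]mulr1 ler_wpM2l.
have h1 : t * N (x *m A) <= t * C1.
  by apply: ler_wpM2l; [exact: ltW | apply: le_trans NxA _; rewrite /C1 lerDl].
have h2 : t * (C1 - b - eps) <= t * D.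
  apply: ler_wpM2l; first exact: ltW.
  have nb : - b <= `|b| by rewrite -normrN ler_norm.
  by rewrite /D; move: nb e0; lra.
rewrite -/b mulrDr; rewrite !mulrBr in h2; lra.
Qed.

Definition Tm (d : R) : 'M[R]_n := (1 - d) *: 1%:M + d *: Pm.

Lemma xT d x : x *m Tm d = (1 - d) *: x + d *: (g x *: u).
Proof. by rewrite /Tm mulmxDr -!scalemxAr mulmx1 xP. Qed.

Lemma uT d : u *m Tm d = u.
Proof. by rewrite xT Hgu scale1r -scalerDl subrK scale1r. Qed.

Lemma NxT_le d x : 0 <= d -> d <= 1 -> N (x *m Tm d) <= (1 - d) * N x + d * `|g x|.
Proof.
move=> d0 d1; rewrite xT; apply: le_trans (NT HN _ _) _.
rewrite !(NZ HN) Hu mulr1 (ger0_norm d0) ger0_norm ?subr_ge0 //.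
Qed.

Lemma NxT_le' d x : 0 <= d -> d <= 1 -> N (x *m Tm d) <= N x.
Proof.
move=> d0 d1; apply: le_trans (NxT_le x d0 d1) _.
have := g_le x; have := Nge0 HN x; nra.
Qed.

Lemma opnormT d : 0 <= d -> d <= 1 -> opnorm N (Tm d) = 1.
Proof.
move=> d0 d1; apply: sup_eq; first by exists u => /=; [rewrite Hu | rewrite uT Hu].
by move=> z [y Ny <-]; exact: le_trans (NxT_le' y d0 d1) Ny.
Qed.

Lemma D1 (F : 'M[R]_n -> R) : is_dual_elt (opnorm N) F -> dual_norm (opnorm N) F = 1 ->
  forall B s, 0 < s -> (forall x, N x <= 1 -> N (x *m B) <= s) -> F B <= s.
Proof.
move=> [Fl [M HM]] Fn B s s0 HB.
pose B' := s^-1 *: B.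
have oB : opnorm N B' <= 1.
  apply: opnorm_le => // x Nx; rewrite /B' -scalemxAr (NZ HN) ger0_norm; last by rewrite invr_ge0 ltW.
  by rewrite ler_pdivrMl // mulr1; exact: HB.
have FB : `|F B'| <= 1.
  rewrite -Fn; apply: (@sup_ge _ _ _ `|M|); first by exists B'.
  move=> z [A oA <-]; apply: le_trans (HM A) _.
  apply: le_trans (ler_wpM2r (opnorm_ge0 HN A) (ler_norm M)) _.
  by rewrite -[leRHS]mulr1; apply: ler_wpM2l.
have -> : B = s *: B' by rewrite /B' scalerA mulfV ?gt_eqF // scale1r.
rewrite (linZ Fl); apply: le_trans (ler_norm _) _.
by rewrite normrM (ger0_norm (ltW s0)) -[leRHS]mulr1; apply: ler_wpM2l => //; exact: ltW.
Qed.

Lemma smoothT d : 0 < d -> d < 1 -> smooth_norm_one_ops N (Tm d).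
Proof.
move=> d0 d1.
have oT := opnormT (ltW d0) (ltW d1).
split => //; split.
  move=> T0; have := uT d; rewrite T0 mulmx0 => u0.
  by move: u_neq0; rewrite -u0 eqxx.
pose F0 := fun A : 'M[R]_n => g (u *m A).
have F0l : is_linear_fun F0.
  by move=> a A B; rewrite /F0 mulmxDr -scalemxAr (linD g_lin) (linZ g_lin).
have F0b A : `|F0 A| <= opnorm N A.
  by apply: le_trans (g_le _) _; apply: opnorm_ge => //; rewrite Hu.
exists F0; split.
  split; first by split => //; exists 1 => A; rewrite mul1r.
    apply: sup_eq; first by exists (Tm d); rewrite /= ?oT // /F0 uT Hgu normr1.
    by move=> z [A oA <-]; exact: le_trans (F0b A) oA.
  by rewrite /F0 uT Hgu oT.
move=> F [HFd HFn HFT].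
have Fl : is_linear_fun F by case: HFd.
have FP : 1 <= F Pm.
  have FI : F 1%:M <= 1.
    by apply: (D1 HFd HFn) => // x Nx; rewrite mulmx1.
  have := HFT; rewrite oT /Tm (linD Fl) !(linZ Fl) => HT.
  have : d * 1 <= d * F Pm by move: FI HT; nra.
  by rewrite ler_pM2l.
have Hle A : F A <= F0 A.
  apply/ler_addgt0Pr => e e0.
  have [t [t0 [tb Ht]]] := estimate A e0.
  have s0 : 0 < 1 + t * (g (u *m A) + e).
    have := ler_norm (- g (u *m A)); rewrite normrN => nb.
    have : 0 < t * e by rewrite mulr_gt0.
    move: tb nb t0; nra.
  have := D1 HFd HFn s0 Ht.
  rewrite (linD Fl) (linZ Fl) /F0 => H.
  have : t * F A <= t * (g (u *m A) + e) by move: H FP; lra.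
  by rewrite ler_pM2l.
apply: funext => A; apply/le_anti; rewrite Hle andbT.
have := Hle (- A); rewrite (linN Fl) /F0 mulmxN (linN g_lin) lerN2.
done.
Qed.

Lemma final_contra x0 : N x0 = 1 -> g x0 = 0 -> ~ uniform_sBPBp N (smooth_norm_one_ops N).
Proof.
move=> Nx0 gx0 Hs.
have [eta [eta0 H]] := Hs 1 ltr01.
have e2 : 0 < eta + 2 by rewrite addr_gt0.
pose d := eta / (eta + 2).
have d0 : 0 < d by rewrite divr_gt0.
have d1 : d < 1 by rewrite ltr_pdivrMr // mul1r ltrDl.
have de : d < eta.
  by rewrite ltr_pdivrMr //; move: eta0; nra.
have NT0 : N (x0 *m Tm d) > 1 - eta.
  rewrite xT gx0 scale0r scaler0 addr0 (NZ HN) Nx0 mulr1 ger0_norm ?subr_ge0 ?ltW //.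
  by rewrite ltrD2l ltrN2.
have [x1 [Nx1 NT1 Nd]] := H (Tm d) x0 (smoothT d0 d1) Nx0 NT0.
have := NxT_le x1 (ltW d0) (ltW d1); rewrite NT1 Nx1 => h.
have gx1 : 1 <= `|g x1|.
  have : d * 1 <= d * `|g x1| by move: h; lra.
  by rewrite ler_pM2l.
have : 1 <= N (x1 - x0).
  apply: le_trans gx1 _; apply: le_trans (g_le _).
  by rewrite (linB g_lin) gx0 subr0.
by rewrite leNgt Nd.
Qed.
End Main2.

Theorem theorem2p10 (R : realType) (n : nat) (N : 'rV[R]_n -> R) :
  (1 < n)%N -> is_norm N -> strictly_convex N -> smooth_space N ->
  ~ uniform_sBPBp N (smooth_norm_one_ops N).
Proof.
move=> n1 HN Hsc Hsm.
have n0 : (0 < n)%N by apply: ltn_trans n1.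
pose i0 : 'I_n := Ordinal n0.
pose i1 : 'I_n := Ordinal n1.
pose e0 : 'rV[R]_n := delta_mx 0 i0.
pose e1 : 'rV[R]_n := delta_mx 0 i1.
have e00 : e0 != 0.
  apply/eqP => h; have := congr1 (fun M : 'rV[R]_n => M 0 i0) h.
  by rewrite !mxE !eqxx /= => /eqP; rewrite oner_eq0.
have Ne0 := Ngt0 HN e00.
pose u := (N e0)^-1 *: e0.
have Nu : N u = 1.
  by rewrite /u (NZ HN) ger0_norm ?invr_ge0 ?ltW // mulVf // gt_eqF.
have u0 : u <> 0 by move=> u0; move: Nu; rewrite u0 (N0 HN) => /eqP; rewrite eq_sym oner_eq0.
have [_ [g [[Hg Hgd Hgu] _]]] := Hsm u u0.
rewrite Nu in Hgu.
have gl : is_linear_fun g by case: Hg.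
have [v [v0 gv]] : exists v : 'rV[R]_n, v != 0 /\ g v = 0.
  have [ge0|ge0] := eqVneq (g e0) 0; first by exists e0.
  exists (g e1 *: e0 - g e0 *: e1); split.
    apply/eqP => h; have := congr1 (fun M : 'rV[R]_n => M 0 i1) h.
    rewrite !mxE !eqxx /=.
    by rewrite mulr0 mulr1 sub0r => /eqP; rewrite oppr_eq0 (negbTE ge0).
  by rewrite (linB gl) !(linZ gl) mulrC subrr.
have Nv := Ngt0 HN v0.
apply: (final_contra HN Hsc Hsm Nu Hg Hgd Hgu (x0 := (N v)^-1 *: v)).
  by rewrite (NZ HN) ger0_norm ?invr_ge0 ?ltW // mulVf // gt_eqF.
by rewrite (linZ gl) gv mulr0.
Qed.
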